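(* Let $G$ be a solvable group equipped with a purely positive length function, and let $A$ be a maximal abelian normal subgroup of $G$. Assume that $A$ is torsion-free. Then $C_{G}(A)=A$, where $C_G(A)$ is the centralizer of $A$ in $G$.
   Context: A length function on a group $G$ is a function $l:G\to[0,\infty)$ such that $l(g^{n})=|n|\,l(g)$ for all $g\in G,n\in\mathbb{Z}$; $l(hgh^{-1})=l(g)$ for all $g,h$; and $l(ab)\leq l(a)+l(b)$ whenever $a,b$ commute. It is purely positive if $l(g)>0$ for every element of infinite order. *)

(* Defs.v *)
From Stdlib Require Import Reals ZArith.
Open Scope R_scope.

Record Group := {
  carrier :> Type;
  gmul : carrier -> carrier -> carrier;
  ginv : carrier -> carrier;
  gone : carrier;
  gmulA : forall x y z, gmul x (gmul y z) = gmul (gmul x y) z;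
  gmul1 : forall x, gmul gone x = x;
  gmulV : forall x, gmul (ginv x) x = gone
}.

Arguments gmul {g}.
Arguments ginv {g}.
Arguments gone {g}.

Section Defs.
Variable G : Group.

Definition subset (A B : G -> Prop) : Prop := forall x, A x -> B x.

Definition is_subgroup (H : G -> Prop) : Prop :=
  H gone /\ (forall x y, H x -> H y -> H (gmul x y)) /\ (forall x, H x -> H (ginv x)).

Definition conj (g x : G) : G := gmul (gmul g x) (ginv g).

Definition is_normal (H : G -> Prop) : Prop :=
  is_subgroup H /\ forall g x, H x -> H (conj g x).

Definition is_abelian (H : G -> Prop) : Prop :=
  forall x y, H x -> H y -> gmul x y = gmul y x.

Definition max_abelian_normal (A : G -> Prop) : Prop :=
  is_normal A /\ is_abelian A /\
  forall B, is_normal B -> is_abelian B -> subset A B -> subset B A.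

Definition centralizer (A : G -> Prop) : G -> Prop :=
  fun g => forall a, A a -> gmul g a = gmul a g.

Definition generated (S : G -> Prop) : G -> Prop :=
  fun x => forall H, is_subgroup H -> subset S H -> H x.

Definition commutator (x y : G) : G := gmul (gmul (ginv x) (ginv y)) (gmul x y).

Definition derived_sub (H : G -> Prop) : G -> Prop :=
  generated (fun z => exists x y, H x /\ H y /\ z = commutator x y).

Fixpoint derived (n : nat) : G -> Prop :=
  match n with
  | O => fun _ => True
  | S m => derived_sub (derived m)
  end.

Definition solvable : Prop := exists n, forall x, derived n x -> x = gone.

Fixpoint npow (n : nat) (g : G) : G :=
  match n with
  | O => gone
  | S m => gmul g (npow m g)
  end.

Definition zpow (n : Z) (g : G) : G :=
  match n with
  | Z0 => gone
  | Zpos p => npow (Pos.to_nat p) g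
  | Zneg p => ginv (npow (Pos.to_nat p) g)
  end.

Definition infinite_order (g : G) : Prop := forall n : nat, (0 < n)%nat -> npow n g <> gone.

Definition torsion_free (A : G -> Prop) : Prop :=
  forall a, A a -> a <> gone -> infinite_order a.

Definition length_function (l : G -> R) : Prop :=
  (forall g, 0 <= l g) /\
  (forall g (n : Z), l (zpow n g) = IZR (Z.abs n) * l g) /\
  (forall g h, l (conj h g) = l g) /\
  (forall a b, gmul a b = gmul b a -> l (gmul a b) <= l a + l b).

Definition purely_positive (l : G -> R) : Prop :=
  forall g, infinite_order g -> 0 < l g.

End Defs.

Arguments is_subgroup {G}. Arguments is_normal {G}. Arguments is_abelian {G}.
Arguments max_abelian_normal {G}. Arguments centralizer {G}.
Arguments torsion_free {G}. Arguments length_function {G}.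
Arguments purely_positive {G}. Arguments conj {G}. Arguments subset {G}.

(* Main.v *)
Require Import Defs.
From Stdlib Require Import Reals ZArith Lia Lra Classical.

Local Notation "x ** y" := (gmul x y) (at level 40, left associativity).

Lemma mulA' (G : Group) (x y z : G) : x ** y ** z = x ** (y ** z).
Proof. symmetry; apply gmulA. Qed.

Lemma mulgV (G : Group) (x : G) : x ** ginv x = gone.
Proof.
  transitivity (ginv (ginv x) ** ginv x ** (x ** ginv x)).
  - rewrite gmulV, gmul1. reflexivity.
  - rewrite mulA', (gmulA G (ginv x) x), gmulV, gmul1. apply gmulV.
Qed.

Lemma mulg1 (G : Group) (x : G) : x ** gone = x.
Proof. rewrite <- (gmulV G x), gmulA, mulgV. apply gmul1. Qed.

Lemma mulKg (G : Group) (x y : G) : ginv x ** (x ** y) = y.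
Proof. rewrite gmulA, gmulV. apply gmul1. Qed.

Lemma mulVKg (G : Group) (x y : G) : x ** (ginv x ** y) = y.
Proof. rewrite gmulA, mulgV. apply gmul1. Qed.

Lemma cancel_l (G : Group) (x y z : G) : z ** x = z ** y -> x = y.
Proof. intro H. rewrite <- (mulKg G z x), H. apply mulKg. Qed.

Lemma cancel_r (G : Group) (x y z : G) : x ** z = y ** z -> x = y.
Proof. intro H. rewrite <- (mulg1 G x), <- (mulgV G z), gmulA, H, mulA', mulgV. apply mulg1. Qed.

Lemma invK (G : Group) (x : G) : ginv (ginv x) = x.
Proof. apply (cancel_r G _ _ (ginv x)). rewrite gmulV, mulgV. reflexivity. Qed.

Lemma invM (G : Group) (x y : G) : ginv (x ** y) = ginv y ** ginv x.
Proof. apply (cancel_l G _ _ (x ** y)). rewrite mulgV, mulA', mulVKg, mulgV. reflexivity. Qed.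

Lemma inv1 (G : Group) : ginv (@gone G) = gone.
Proof. rewrite <- (mulg1 G (ginv gone)). apply gmulV. Qed.

Ltac gs := repeat (rewrite ?mulA', ?gmul1, ?mulg1, ?gmulV, ?mulgV, ?mulKg, ?mulVKg, ?invK, ?invM, ?inv1).
Ltac gsh h := repeat (rewrite ?mulA', ?gmul1, ?mulg1, ?gmulV, ?mulgV, ?mulKg, ?mulVKg, ?invK, ?invM, ?inv1 in h).

Lemma conjM (G : Group) (g x y : G) : conj g (x ** y) = conj g x ** conj g y.
Proof. unfold conj. gs. reflexivity. Qed.
Lemma conjV (G : Group) (g x : G) : conj g (ginv x) = ginv (conj g x).
Proof. unfold conj. gs. reflexivity. Qed.
Lemma conj1 (G : Group) (g : G) : conj g gone = gone.
Proof. unfold conj. gs. reflexivity. Qed.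
Lemma conjC (G : Group) (g x y : G) :
  conj g (commutator G x y) = commutator G (conj g x) (conj g y).
Proof. unfold commutator, conj. gs. reflexivity. Qed.
Lemma conjMg (G : Group) (a b x : G) : conj (a ** b) x = conj a (conj b x).
Proof. unfold conj. gs. reflexivity. Qed.

Lemma gen_sub (G : Group) (S : G -> Prop) : is_subgroup (generated G S).
Proof.
  split; [|split].
  - intros H [h1 _] _. exact h1.
  - intros x y hx hy H HH HS. pose proof HH as [_ [hm _]]. apply hm; [apply hx|apply hy]; auto.
  - intros x hx H HH HS. pose proof HH as [_ [_ hi]]. apply hi; apply hx; auto.
Qed.

Lemma gen_in (G : Group) (S : G -> Prop) x : S x -> generated G S x.
Proof. intros hs H _ HS. apply HS, hs. Qed.

Lemma gen_conj (G : Group) (S : G -> Prop) :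
  (forall g s, S s -> S (conj g s)) -> forall g x, generated G S x -> generated G S (conj g x).
Proof.
  intros hS g x hx H HH HS.
  apply (hx (fun y => H (conj g y))).
  - destruct HH as [h1 [hm hi]]. split; [|split].
    + rewrite conj1. exact h1.
    + intros a b ha hb. rewrite conjM. auto.
    + intros a ha. rewrite conjV. auto.
  - intros s hs. apply HS, hS, hs.
Qed.

Lemma derived_normal (G : Group) n : is_normal (derived G n).
Proof.
  induction n as [|n IH].
  - split; [split; [|split]|]; simpl; auto.
  - simpl. split; [apply gen_sub|].
    apply gen_conj. intros g s [x [y [hx [hy ->]]]].
    exists (conj g x), (conj g y). destruct IH as [_ IH].
    split; [auto|split; [auto|apply conjC]].
Qed.


Definition Eset (G : Group) (A : G -> Prop) n : G -> Prop :=
  fun x => exists d, derived G n d /\ A (x ** ginv d).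

Lemma cong_mul (G : Group) (A : G -> Prop) : is_normal A ->
  forall x x' y y', A (x ** ginv x') -> A (y ** ginv y') -> A ((x ** y) ** ginv (x' ** y')).
Proof.
  intros [[h1 [hm hi]] hn] x x' y y' hx hy.
  replace ((x ** y) ** ginv (x' ** y')) with (conj x (y ** ginv y') ** (x ** ginv x')).
  - apply hm; auto.
  - unfold conj. gs. reflexivity.
Qed.

Lemma cong_inv (G : Group) (A : G -> Prop) : is_normal A ->
  forall x x', A (x ** ginv x') -> A (ginv x ** ginv (ginv x')).
Proof.
  intros [[h1 [hm hi]] hn] x x' hx.
  replace (ginv x ** ginv (ginv x')) with (conj (ginv x) (ginv (x ** ginv x'))).
  - apply hn, hi, hx.
  - unfold conj. gs. reflexivity.
Qed.

Lemma cong_comm (G : Group) (A : G -> Prop) : is_normal A ->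
  forall x x' y y', A (x ** ginv x') -> A (y ** ginv y') ->
  A (commutator G x y ** ginv (commutator G x' y')).
Proof.
  intros hA x x' y y' hx hy. unfold commutator.
  apply cong_mul; auto; apply cong_mul; auto; apply cong_inv; auto.
Qed.

Lemma E_sub (G : Group) (A : G -> Prop) n : is_normal A -> is_subgroup (Eset G A n).
Proof.
  intros hA. destruct (derived_normal G n) as [[d1 [dm di]] _].
  pose proof hA as [[h1 [hm hi]] hn].
  split; [|split].
  - exists gone. split; [exact d1|gs; exact h1].
  - intros x y [d [hd hx]] [d' [hd' hy]]. exists (d ** d'). split; auto.
    apply cong_mul; auto.
  - intros x [d [hd hx]]. exists (ginv d). split; auto. apply cong_inv; auto.
Qed.

Lemma E_normal (G : Group) (A : G -> Prop) n : is_normal A -> is_normal (Eset G A n).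
Proof.
  intros hA. split; [apply E_sub; auto|].
  intros g x [d [hd hx]]. exists (conj g d). split.
  - apply (derived_normal G n), hd.
  - rewrite <- conjV, <- conjM. apply hA, hx.
Qed.

Lemma E_A (G : Group) (A : G -> Prop) n : is_normal A -> forall a, A a -> Eset G A n a.
Proof.
  intros hA a ha. exists gone. split.
  - apply (derived_normal G n).
  - gs. exact ha.
Qed.

Lemma E_comm (G : Group) (A : G -> Prop) n : is_normal A -> forall x y,
  Eset G A n x -> Eset G A n y -> Eset G A (S n) (commutator G x y).
Proof.
  intros hA x y [d [hd hx]] [d' [hd' hy]].
  exists (commutator G d d'). split.
  - simpl. apply gen_in. exists d, d'. auto.
  - apply cong_comm; auto.
Qed.

Lemma E0 (G : Group) (A : G -> Prop) : is_normal A -> forall x, Eset G A 0 x.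
Proof. intros hA x. exists x. split; [exact I|]. gs. apply hA. Qed.

Lemma C_sub (G : Group) (A : G -> Prop) : is_subgroup (centralizer A).
Proof.
  split; [|split]; unfold centralizer.
  - intros a _. gs. reflexivity.
  - intros x y hx hy a ha. rewrite mulA', hy, gmulA, hx by auto. gs. reflexivity.
  - intros x hx a ha. apply (cancel_l G _ _ x). apply (cancel_r G _ _ x).
    gs. rewrite hx by auto. reflexivity.
Qed.

Lemma C_normal (G : Group) (A : G -> Prop) : is_normal A -> is_normal (centralizer A).
Proof.
  intros hA. split; [apply C_sub|].
  intros g x hx a ha. unfold conj.
  assert (h := hx (conj (ginv g) a) (proj2 hA _ _ ha)). unfold conj in h.
  apply (cancel_l G _ _ (ginv g)). apply (cancel_r G _ _ g).
  gs. gsh h. exact h.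
Qed.

Lemma A_C (G : Group) (A : G -> Prop) : is_abelian A -> forall a, A a -> centralizer A a.
Proof. intros hab a ha b hb. apply hab; auto. Qed.

Lemma comm_inv (G : Group) (x y : G) : x ** y = y ** x -> ginv x ** y = y ** ginv x.
Proof.
  intro h. apply (cancel_l G _ _ x). apply (cancel_r G _ _ x). gs. symmetry. exact h.
Qed.

Lemma comm_pow (G : Group) (x y : G) m : x ** y = y ** x -> x ** npow G m y = npow G m y ** x.
Proof.
  intro h. induction m as [|m IH]; simpl.
  - gs. reflexivity.
  - rewrite gmulA, h, mulA', IH. gs. reflexivity.
Qed.

Lemma zpow_nat (G : Group) (c : G) m : zpow G (Z.of_nat m) c = npow G m c.
Proof.
  destruct m as [|m]; [reflexivity|].
  simpl. rewrite SuccNat2Pos.id_succ. reflexivity.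
Qed.

Lemma commutator_eq (G : Group) (x y : G) : x ** y = y ** x ** commutator G x y.
Proof. unfold commutator. gs. reflexivity. Qed.

Lemma keyK (G : Group) (l : G -> R) (A : G -> Prop) :
  length_function l -> purely_positive l -> torsion_free A ->
  forall x y, centralizer A x -> centralizer A y -> A (commutator G x y) ->
  x ** y = y ** x.
Proof.
  intros [hpos [hz [hc hsub]]] hpp htf x y hx hy hcA.
  destruct (classic (commutator G x y = gone)) as [e|ne].
  - rewrite (commutator_eq G x y) at 1. rewrite e, mulg1. reflexivity.
  - exfalso.
    remember (commutator G x y) as c eqn:Ec.
    assert (lc : 0 < l c) by exact (hpp c (htf c hcA ne)).
    assert (hcx : x ** c = c ** x) by exact (hx c hcA).
    assert (hcw : ginv y ** c = c ** ginv y) by exact (comm_inv G _ _ (hy c hcA)).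
    assert (F3 : forall m, conj (npow G m (ginv y)) x = x ** npow G m c).
    { induction m as [|m IH]; simpl.
      - unfold conj. gs. reflexivity.
      - rewrite conjMg, IH, conjM.
        assert (e1 : conj (ginv y) x = x ** c).
        { rewrite Ec. unfold conj, commutator. gs. reflexivity. }
        assert (e2 : conj (ginv y) (npow G m c) = npow G m c).
        { unfold conj. rewrite (comm_pow G _ _ m hcw). gs. reflexivity. }
        rewrite e1, e2. gs. reflexivity. }
    assert (F4 : forall m, INR m * l c <= 2 * l x).
    { intro m.
      assert (eq : npow G m c = ginv x ** (x ** npow G m c)) by (gs; reflexivity).
      assert (cm : ginv x ** (x ** npow G m c) = (x ** npow G m c) ** ginv x).
      { gs. rewrite gmulA, (comm_pow G _ _ m hcx). gs. reflexivity. }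
      assert (l1 : l (npow G m c) = INR m * l c).
      { rewrite <- zpow_nat, hz. replace (Z.abs (Z.of_nat m)) with (Z.of_nat m) by lia.
        rewrite <- INR_IZR_INZ. reflexivity. }
      assert (l2 : l (ginv x) = l x).
      { pose proof (hz x (-1)%Z) as h. simpl in h. rewrite mulg1 in h. rewrite h. simpl. lra. }
      assert (l3 : l (x ** npow G m c) = l x).
      { rewrite <- F3. apply hc. }
      rewrite <- l1, eq. pose proof (hsub _ _ cm) as h. lra. }
    destruct (INR_unbounded (2 * l x / l c)) as [n hn].
    pose proof (F4 n) as h4.
    assert (h5 : 2 * l x / l c * l c < INR n * l c) by (apply Rmult_lt_compat_r; lra).
    replace (2 * l x / l c * l c) with (2 * l x) in h5 by (field; lra).
    lra.
Qed.

Lemma sub_comm (G : Group) (H : G -> Prop) x y :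
  is_subgroup H -> H x -> H y -> H (commutator G x y).
Proof.
  intros [h1 [hm hi]] hx hy. unfold commutator. auto.
Qed.

Theorem lemma16 (G : Group) (l : G -> R) (A : G -> Prop) :
  solvable G ->
  length_function l -> purely_positive l ->
  max_abelian_normal A -> torsion_free A ->
  forall g : G, centralizer A g <-> A g.
Proof.
  intros [N hN] hl hpp [hA [hab hmax]] htf g.
  split.
  2: { intro ha. apply A_C; auto. }
  intro hg.
  set (D := fun m x => centralizer A x /\ Eset G A m x).
  assert (key : forall k m, (m + k = N)%nat -> subset (D m) A).
  { induction k as [|k IHk].
    - intros m hm x [_ [d [hd hx]]]. rewrite Nat.add_0_r in hm. subst m.
      rewrite (hN d hd), inv1, mulg1 in hx. exact hx.
    - intros m hm. assert (ih := IHk (S m) ltac:(lia)).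
      pose proof (C_sub G A) as [c1 [cm ci]].
      pose proof (E_sub G A m hA) as [e1 [em ei]].
      apply hmax.
      + split; [split; [|split]|].
        * split; auto.
        * intros x y [hx ex] [hy ey]. split; auto.
        * intros x [hx ex]. split; auto.
        * intros h x [hx ex]. split.
          -- apply (C_normal G A hA), hx.
          -- apply (E_normal G A m hA), ex.
      + intros x y [hx ex] [hy ey]. apply (keyK G l A hl hpp htf x y hx hy).
        apply ih. split.
        * apply sub_comm; auto. apply C_sub.
        * apply E_comm; auto.
      + intros a ha. split; [apply A_C|apply E_A]; auto. }
  apply (key N 0%nat); [lia|]. split; auto. apply E0; auto.
Qed.
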